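(* Let $(\mathcal T_n)_{n\in\mathbb N_0}$ be a generalised preferential attachment tree with deterministic attachment function $f:\mathbb N_0\to(0,\infty)$, and assume that for some $\kappa>0$ and all $n\in\mathbb N_0$, \[\max_{i\le n}\frac{f(i)}{i+1}\le\kappa\frac{f(n)}{n+1}.\] Let $\mathcal M_n=\max_{u\in\mathcal T_n}\deg^+(u,\mathcal T_n)$. Then for every $\varepsilon>0$ there exists $r>0$ such that \[\mathbb P\big(\forall n\in\mathbb N:\ \mathcal M_n\,n^{-1/(2\kappa)}\ge r\big)\ge1-\varepsilon.\]
   Context: Generalised preferential attachment tree with deterministic $f:\mathbb N_0\to(0,\infty)$: $\mathcal T_0$ is a single node labelled $0$; given $\mathcal T_k$ (nodes $0,\dots,k$), choose a node $j$ with probability $f(\deg^+(j,\mathcal T_k))/\mathcal Z_k$, where $\mathcal Z_k=\sum_{j=0}^kf(\deg^+(j,\mathcal T_k))$, and add node $k+1$ with an edge directed from $j$ to $k+1$. $\deg^+(u,T)$ is the out-degree of $u$ in the directed tree $T$. *)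

(* Defs.v *)
From HB Require Import structures.
From mathcomp Require Import all_boot all_order all_algebra.
From mathcomp Require Import all_classical all_reals all_analysis.
Set Implicit Arguments. Unset Strict Implicit. Unset Printing Implicit Defensive.
Import Order.TTheory GRing.Theory Num.Theory.
Local Open Scope classical_set_scope.
Local Open Scope ring_scope.

(* A tree T_k on nodes 0..k is encoded by its attachment sequence
   s = [:: s_0; ...; s_{k-1}], where node i+1 was attached to parent s_i. *)
Definition deg_out (s : seq nat) (u : nat) : nat := count (pred1 u) s.

Definition Zpart {R : realType} (f : nat -> R) (s : seq nat) : R :=
  \sum_(j < (size s).+1) f (deg_out s j).

Definition step_prob {R : realType} (f : nat -> R) (s : seq nat) (j : nat) : R :=
  if (j <= size s)%N then f (deg_out s j) / Zpart f s else 0.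

Definition path_weight {R : realType} (f : nat -> R) (s : seq nat) : R :=
  \prod_(i < size s) step_prob f (take i s) (nth 0%N s i).

(* J k w = parent of node k+1; history up to time k *)
Definition hist {T : Type} (J : nat -> T -> nat) (k : nat) (w : T) : seq nat :=
  [seq J i w | i <- iota 0 k].

Definition is_GPA {R : realType} {d} {T : measurableType d}
  (P : probability T R) (f : nat -> R) (J : nat -> T -> nat) : Prop :=
  (forall k j, measurable [set w : T | J k w = j]) /\
  (forall s : seq nat,
     P [set w : T | hist J (size s) w = s] = (path_weight f s)%:E).

Definition maxdeg {T : Type} (J : nat -> T -> nat) (n : nat) (w : T) : nat :=
  (\max_(u < n.+1) deg_out (hist J n w) u)%N.

(* Main.v *)
Require Import Defs.
From HB Require Import structures.
From mathcomp Require Import all_boot all_order all_algebra.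
From mathcomp Require Import all_classical all_reals all_analysis.
From mathcomp Require Import ring lra zify.
Import Order.TTheory GRing.Theory Num.Theory.

Definition Mx (s : seq nat) : nat := (\max_(u < (size s).+1) deg_out s u)%N.

Lemma deg_rcons s j u : deg_out (rcons s j) u = (deg_out s u + (j == u))%N.
Proof. by rewrite /deg_out -cats1 count_cat /= addn0. Qed.

Lemma sum_deg s m : (\sum_(j < m) deg_out s j)%N = count (fun x => x < m)%N s.
Proof.
elim: m => [|m IH].
  by rewrite big_ord0 (@eq_count _ _ pred0) ?count_pred0.
rewrite big_ord_recr /= IH /deg_out -count_predUI.
rewrite (@eq_count _ (predI _ _) pred0) ?count_pred0 ?addn0; last first.
  by move=> x /=; rewrite andbC; case: eqP => // ->; rewrite ltnn.
apply: eq_count => x /=; by rewrite ltnS [in RHS]leq_eqVlt orbC.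
Qed.

Lemma sum_deg_le s : (\sum_(j < (size s).+1) deg_out s j <= size s)%N.
Proof. by rewrite sum_deg count_size. Qed.

Lemma Mx_ge s u : (u <= size s)%N -> (deg_out s u <= Mx s)%N.
Proof.
move=> us; have := @leq_bigmax _ (fun i : 'I_(size s).+1 => deg_out s i) (inord u).
by rewrite inordK.
Qed.

Lemma Mx_rcons s j : (Mx s <= Mx (rcons s j))%N.
Proof.
apply/bigmax_leqP => u _.
have H : (u <= size (rcons s j))%N by rewrite size_rcons; exact: ltnW (ltn_ord u).
apply: leq_trans _ (@Mx_ge _ _ H); by rewrite deg_rcons leq_addr.
Qed.

Lemma Mx_arg s : exists2 u, (u <= size s)%N & Mx s = deg_out s u.
Proof.
have [i0 Hi] := @bigop.eq_bigmax _ (fun i : 'I_(size s).+1 => deg_out s i) ltac:(by rewrite card_ord).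
by exists i0 => //; rewrite -ltnS.
Qed.

Lemma Mx_rcons_arg s u : (u <= size s)%N -> Mx s = deg_out s u -> (Mx s < Mx (rcons s u))%N.
Proof.
move=> us ->.
have H : (u <= size (rcons s u))%N by rewrite size_rcons; exact: leqW us.
by apply: leq_trans _ (@Mx_ge _ _ H); rewrite deg_rcons eqxx addn1.
Qed.

Local Open Scope classical_set_scope.
Local Open Scope ring_scope.

Definition hh {R : realType} (m : nat) : R := \prod_(i < m) (1 - (2 * (i.+1)%:R)^-1).
Definition aa {R : realType} (kappa : R) (n : nat) : R :=
  \prod_(k < n) (1 - (2 * kappa * (2 * k + 1)%:R)^-1).
Definition VV {R : realType} (kappa : R) (s : seq nat) : R :=
  hh (Mx s) / aa kappa (size s).

Lemma hh_S (R : realType) m : hh m.+1 = hh m * (1 - (2 * (m.+1)%:R)^-1) :> R.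
Proof. by rewrite /hh big_ord_recr. Qed.

Lemma fac_h_gt0 (R : realType) (m : nat) : 0 < 1 - (2 * (m.+1)%:R)^-1 :> R.
Proof.
have h1 : 1 <= (m.+1)%:R :> R by rewrite ler1n.
have h2 : (2 * (m.+1)%:R)^-1 <= 2^-1 :> R.
  by rewrite lef_pV2 ?posrE ?mulr_gt0 // ?ltr0n //; lra.
move: h2; set x := (_ * _)^-1; lra.
Qed.

Lemma hh_gt0 (R : realType) m : 0 < hh m :> R.
Proof. by apply: prodr_gt0 => i _; apply: fac_h_gt0. Qed.

Lemma hh_S_le (R : realType) m : hh m.+1 <= hh m :> R.
Proof.
rewrite hh_S; have := hh_gt0 R m; have : 0 < (2 * (m.+1)%:R)^-1 :> R.
  by rewrite invr_gt0 mulr_gt0 ?ltr0n.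
move=> h1 h2; rewrite ler_piMr //; lra.
Qed.

Lemma hh_anti (R : realType) m n : (m <= n)%N -> hh n <= hh m :> R.
Proof.
elim: n => [|n IH]; first by rewrite leqn0 => /eqP ->.
rewrite leq_eqVlt => /orP [/eqP -> //| ]; rewrite ltnS => /IH.
exact: le_trans (hh_S_le _ _).
Qed.

Lemma aa_S (R : realType) (kappa : R) n :
  aa kappa n.+1 = aa kappa n * (1 - (2 * kappa * (2 * n + 1)%:R)^-1).
Proof. by rewrite /aa big_ord_recr. Qed.

Lemma fac_a_gt0 (R : realType) (kappa : R) (k : nat) : 1 <= kappa ->
  0 < 1 - (2 * kappa * (2 * k + 1)%:R)^-1.
Proof.
move=> hk.
have h1 : 1 <= (2 * k + 1)%:R :> R by rewrite ler1n addn1.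
have h3 : 2 <= 2 * kappa * (2 * k + 1)%:R.
  have : 1 <= kappa * (2 * k + 1)%:R by rewrite -[1]mulr1; apply: ler_pM => //; lra.
  rewrite -mulrA; lra.
have h2 : (2 * kappa * (2 * k + 1)%:R)^-1 <= 2^-1 :> R.
  by rewrite lef_pV2 ?posrE //; lra.
move: h2; set x := (_ * _)^-1; lra.
Qed.

Lemma aa_gt0 (R : realType) (kappa : R) n : 1 <= kappa -> 0 < aa kappa n.
Proof. by move=> hk; apply: prodr_gt0 => i _; apply: fac_a_gt0. Qed.

Lemma Zpart_gt0 (R : realType) (f : nat -> R) (hf : forall i, 0 < f i) s :
  0 < Zpart f s.
Proof.
rewrite /Zpart big_ord_recl.
have := hf (deg_out s (@ord0 (size s))).
have : 0 <= \sum_(i < size s) f (deg_out s (lift ord0 i)).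
  by apply: sumr_ge0 => i _; apply: ltW.
lra.
Qed.

Lemma step_prob_in (R : realType) (f : nat -> R) s (j : 'I_(size s).+1) :
  step_prob f s j = f (deg_out s j) / Zpart f s.
Proof. by rewrite /step_prob -ltnS ltn_ord. Qed.

Lemma sum_step (R : realType) (f : nat -> R) (hf : forall i, 0 < f i) s :
  \sum_(j < (size s).+1) step_prob f s j = 1.
Proof.
under eq_bigr => j _ do rewrite step_prob_in.
by rewrite -mulr_suml divff // gt_eqF // Zpart_gt0.
Qed.

Lemma step_ge0 (R : realType) (f : nat -> R) (hf : forall i, 0 < f i) s j :
  0 <= step_prob f s j.
Proof.
rewrite /step_prob; case: ifP => // _.
by rewrite divr_ge0 // ltW // ?Zpart_gt0.
Qed.

Lemma Z_le (R : realType) (f : nat -> R) (hf : forall i, 0 < f i) (kappa : R)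
  (hmax : forall n i : nat, (i <= n)%N ->
            f i / (i.+1)%:R <= kappa * (f n / (n.+1)%:R)) s :
  Zpart f s <= kappa * (f (Mx s) / (Mx s).+1%:R) * (2 * size s + 1)%:R.
Proof.
set C := kappa * (f (Mx s) / (Mx s).+1%:R).
have C0 : 0 <= C.
  apply: le_trans (hmax (Mx s) 0%N (leq0n _)).
  by rewrite divr_ge0 // ltW.
apply: (@le_trans _ _ (\sum_(j < (size s).+1) C * (deg_out s j).+1%:R)).
  apply: ler_sum => j _.
  have := hmax (Mx s) (deg_out s j) (@Mx_ge s j (ltn_ord j)).
  by rewrite ler_pdivrMr ?ltr0n.
rewrite -mulr_sumr ler_wpM2l // -natr_sum ler_nat.
under eq_bigr => j _ do rewrite -addn1.
rewrite big_split /= sum1_card card_ord.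
have := sum_deg_le s.
rewrite /= -/(index_enum _).
move=> h; rewrite -(leq_add2r (size s).+1) in h.
apply: leq_trans h _; lia.
Qed.

Lemma kappa_ge1 (R : realType) (f : nat -> R) (hf : forall i, 0 < f i) (kappa : R)
  (hmax : forall n i : nat, (i <= n)%N ->
            f i / (i.+1)%:R <= kappa * (f n / (n.+1)%:R)) : 1 <= kappa.
Proof.
have := hmax 0%N 0%N (leqnn 0); have := hf 0%N.
rewrite divr1; set x := f 0%N => x0 h.
by rewrite -(ler_pM2r x0) mul1r.
Qed.

Lemma p_arg (R : realType) (f : nat -> R) (hf : forall i, 0 < f i) (kappa : R)
  (hmax : forall n i : nat, (i <= n)%N ->
            f i / (i.+1)%:R <= kappa * (f n / (n.+1)%:R)) s u :
  (u <= size s)%N -> Mx s = deg_out s u ->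
  (2 * kappa * (2 * size s + 1)%:R)^-1 <= step_prob f s u / (2 * (Mx s).+1%:R).
Proof.
move=> us hu.
have Zp := @Zpart_gt0 _ _ hf s.
have fp := hf (Mx s).
have Zl := @Z_le _ _ hf _ hmax s.
have kp : 0 < kappa := lt_le_trans ltr01 (@kappa_ge1 _ _ hf _ hmax).
rewrite /step_prob us -hu.
set Z := Zpart f s in Zp Zl *; set F := f (Mx s) in fp Zl *.
set m := (Mx s).+1%:R in Zl *; set N := (2 * size s + 1)%:R in Zl *.
have mp : 0 < m by rewrite ltr0n.
have Np : 0 < N by rewrite ltr0n addn1.
have -> : F / Z / (2 * m) = (2 * m * Z / F)^-1.
  by rewrite !invfM invrK; field; rewrite ?gt_eqF.
rewrite lef_pV2 ?posrE ?divr_gt0 ?mulr_gt0 //.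
rewrite ler_pdivrMr //.
have h := ler_wpM2l (ltW mp) Zl.
have e : m * (kappa * (F / m) * N) = kappa * N * F by field; rewrite gt_eqF.
rewrite e in h; nra.
Qed.

Lemma super (R : realType) (f : nat -> R) (hf : forall i, 0 < f i) (kappa : R)
  (hmax : forall n i : nat, (i <= n)%N ->
            f i / (i.+1)%:R <= kappa * (f n / (n.+1)%:R)) s :
  \sum_(j < (size s).+1) step_prob f s j * VV kappa (rcons s j) <= VV kappa s.
Proof.
have k1 := @kappa_ge1 _ _ hf _ hmax.
have [u us hu] := Mx_arg s.
have key := @p_arg _ _ hf _ hmax s u us hu.
have Ap := @aa_gt0 _ kappa (size s) k1.
have qp := @fac_a_gt0 _ kappa (size s) k1.
set q := 1 - _ in qp.
under eq_bigr => j _ do rewrite /VV size_rcons aa_S mulrA.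
rewrite -mulr_suml ler_pdivrMr ?mulr_gt0 //.
have -> : VV kappa s * (aa kappa (size s) * q) = hh (Mx s) * q.
  by rewrite /VV; field; rewrite gt_eqF.
pose uo : 'I_(size s).+1 := inord u.
have uoE : (uo : nat) = u by rewrite inordK.
have hs := @sum_step _ _ hf s.
rewrite (bigD1 uo) //= in hs; rewrite (bigD1 uo) //=.
set S := \sum_(i < _ | _) step_prob f s i in hs.
have h1 : \sum_(i < (size s).+1 | i != uo) step_prob f s i * hh (Mx (rcons s i))
    <= hh (Mx s) * S.
  rewrite /S mulr_sumr; apply: ler_sum => j _.
  rewrite mulrC; apply: ler_wpM2r; first exact: step_ge0.
  exact/hh_anti/Mx_rcons.
have h2 : step_prob f s uo * hh (Mx (rcons s uo)) <= step_prob f s u * hh (Mx s).+1.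
  rewrite uoE; apply: ler_wpM2l; first exact: step_ge0.
  exact/hh_anti/Mx_rcons_arg.
move: key h1 h2 hs; rewrite hh_S uoE.
have H0 := @hh_gt0 R (Mx s).
set P := step_prob f s u; set H := hh (Mx s); set x := (_ * (Mx s).+1%:R)^-1.
rewrite /q; set y := (_ * _)^-1.
move=> key h1 h2 hs.
have hp : 0 <= H * (P * x - y) by apply: mulr_ge0; [exact: ltW H0 | rewrite subr_ge0].
have e : S = 1 - P by rewrite -hs addrC addrK.
rewrite e in h1; lra.
Qed.


Fixpoint vs (n : nat) : seq (seq nat) :=
  if n is n'.+1 then [seq rcons t j | t <- vs n', j <- iota 0 n'.+1] else [:: [::]].

Lemma vs_size {n s} : s \in vs n -> size s = n.
Proof.
elim: n s => [|n IH] s; first by rewrite inE => /eqP ->.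
by move=> /allpairsP [[t j] [/IH h _ ->]]; rewrite size_rcons h.
Qed.

Lemma vs_uniq n : uniq (vs n).
Proof.
elim: n => [|n IH] //; change (uniq [seq rcons t j | t <- vs n, j <- iota 0 n.+1]).
apply: allpairs_uniq => //; first exact: iota_uniq.
by move=> [t1 j1] [t2 j2] _ _ /= /rcons_inj [-> ->].
Qed.

Lemma big_vs (R : realType) n (F : seq nat -> R) :
  \sum_(s <- vs n.+1) F s = \sum_(t <- vs n) \sum_(j < n.+1) F (rcons t j).
Proof.
have -> : vs n.+1 = [seq rcons t j | t <- vs n, j <- iota 0 n.+1] by [].
rewrite big_allpairs_dep /=; apply: eq_bigr => t _.
by rewrite -(big_mkord predT (fun j => F (rcons t j))) /index_iota subn0.
Qed.

Lemma take_rcons_le (s : seq nat) j k : (k <= size s)%N -> take k (rcons s j) = take k s.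
Proof. by move=> h; rewrite -cats1 takel_cat. Qed.

Lemma pw_rcons (R : realType) (f : nat -> R) t j :
  path_weight f (rcons t j) = path_weight f t * step_prob f t j.
Proof.
rewrite /path_weight size_rcons big_ord_recr /= take_rcons_le // take_size.
rewrite nth_rcons ltnn eqxx; congr (_ * _); apply: eq_bigr => i _.
by rewrite take_rcons_le ?nth_rcons ?ltn_ord // ltnW.
Qed.

Lemma pw_ge0 (R : realType) (f : nat -> R) (hf : forall i, 0 < f i) s :
  0 <= path_weight f s.
Proof. by apply: prodr_ge0 => i _; apply: step_ge0. Qed.

Lemma sum_pw (R : realType) (f : nat -> R) (hf : forall i, 0 < f i) n :
  \sum_(s <- vs n) path_weight f s = 1.
Proof.
elim: n => [|n IH]; first by rewrite /= big_seq1 /path_weight big_ord0.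
rewrite big_vs -IH big_seq [RHS]big_seq; apply: eq_bigr => t /vs_size ht.
under eq_bigr do rewrite pw_rcons.
by rewrite -mulr_sumr -ht sum_step // mulr1.
Qed.

Lemma vs_take {N s} n : s \in vs N -> (n <= N)%N -> take n s \in vs n.
Proof.
elim: N s => [|N IH] s.
  by rewrite inE => /eqP -> ; rewrite leqn0 => /eqP ->.
move=> /allpairsP [[t j] [ht hj ->]].
rewrite leq_eqVlt => /orP [/eqP ->|].
  rewrite take_oversize; last by rewrite size_rcons (@vs_size _ t ht).
  by apply/allpairsP; exists (t, j).
rewrite ltnS => hn; rewrite take_rcons_le; [exact: IH | by rewrite (@vs_size _ t ht)].
Qed.

Lemma vs_0in {n s} : s \in vs n -> (0 < n)%N -> 0%N \in s.
Proof.
elim: n s => [|n IH] s // /allpairsP [[t j] [ht hj ->]] _.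
rewrite mem_rcons inE; case: n IH ht hj => [|n] IH ht hj.
  by move: hj; rewrite /= inE => /eqP ->; rewrite eqxx.
by rewrite (IH _ ht) // orbT.
Qed.

Lemma vs_Mx {n s} : s \in vs n -> (0 < n)%N -> (1 <= Mx s)%N.
Proof.
move=> hs hn; apply: leq_trans _ (@Mx_ge s 0%N (leq0n _)).
by rewrite /deg_out -has_count has_pred1 (vs_0in hs hn).
Qed.


Definition bad {R : realType} (kappa c : R) (s : seq nat) : bool :=
  has (fun k => c <= VV kappa (take k s)) (iota 0 (size s).+1).
Definition Phi {R : realType} (kappa c : R) (s : seq nat) : R :=
  if bad kappa c s then c else VV kappa s.

Lemma bad_rcons (R : realType) (kappa c : R) t j :
  bad kappa c (rcons t j) = bad kappa c t || (c <= VV kappa (rcons t j)).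
Proof.
rewrite /bad.
have -> : (size (rcons t j)).+1 = ((size t).+1 + 1)%N by rewrite size_rcons addn1.
rewrite iotaD has_cat add0n (_ : iota (size t).+1 1 = [:: (size t).+1]) // has_seq1.
rewrite (@take_oversize _ (size t).+1) ?size_rcons //.
congr (_ || _); apply: eq_in_has => k; rewrite mem_iota add0n => /andP [_ hk].
by rewrite take_rcons_le.
Qed.

Lemma VV_gt0 (R : realType) (kappa : R) s : 1 <= kappa -> 0 < VV kappa s.
Proof. by move=> k1; apply: divr_gt0; [exact: hh_gt0 | exact: aa_gt0]. Qed.

Lemma VV_nil (R : realType) (kappa : R) : VV kappa [::] = 1.
Proof.
have e : Mx [::] = 0%N by rewrite /Mx big_ord1.
by rewrite /VV e /hh /aa !big_ord0 divr1. Qed.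

Lemma phi_step (R : realType) (f : nat -> R) (hf : forall i, 0 < f i) (kappa : R)
  (hmax : forall n i : nat, (i <= n)%N ->
            f i / (i.+1)%:R <= kappa * (f n / (n.+1)%:R)) c t :
  \sum_(j < (size t).+1) step_prob f t j * Phi kappa c (rcons t j) <= Phi kappa c t.
Proof.
rewrite /Phi; case bt: (bad kappa c t).
  under eq_bigr => j _ do rewrite bad_rcons bt /=.
  by rewrite -mulr_suml sum_step // mul1r.
apply: le_trans (@super _ _ hf _ hmax t); apply: ler_sum => j _.
apply: ler_wpM2l; first exact: step_ge0.
by rewrite bad_rcons bt /=; case: ifP.
Qed.

Lemma phi_sum (R : realType) (f : nat -> R) (hf : forall i, 0 < f i) (kappa : R)
  (hmax : forall n i : nat, (i <= n)%N ->
            f i / (i.+1)%:R <= kappa * (f n / (n.+1)%:R)) c N :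
  \sum_(s <- vs N) path_weight f s * Phi kappa c s <= Phi kappa c [::].
Proof.
elim: N => [|N IH].
  by rewrite /= big_seq1 /path_weight big_ord0 mul1r.
rewrite big_vs; apply: le_trans IH; rewrite big_seq [leRHS]big_seq.
apply: ler_sum => t /vs_size ht.
under eq_bigr do rewrite pw_rcons -mulrA.
rewrite -mulr_sumr; apply: ler_wpM2l; first exact: pw_ge0.
by rewrite -ht; apply: phi_step.
Qed.

Lemma good_sum (R : realType) (f : nat -> R) (hf : forall i, 0 < f i) (kappa : R)
  (hmax : forall n i : nat, (i <= n)%N ->
            f i / (i.+1)%:R <= kappa * (f n / (n.+1)%:R)) c N : 1 < c ->
  1 - c^-1 <= \sum_(s <- vs N | ~~ bad kappa c s) path_weight f s.
Proof.
move=> c1.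
have k1 := @kappa_ge1 _ _ hf _ hmax.
have c0 : 0 < c by lra.
have hb : c * \sum_(s <- vs N | bad kappa c s) path_weight f s <= 1.
  have P0 : Phi kappa c [::] = 1.
    rewrite /Phi /bad /= VV_nil orbF; case: ifP => //; lra.
  rewrite -P0; apply: le_trans (@phi_sum _ _ hf _ hmax c N).
  rewrite mulr_sumr big_mkcond /=; apply: ler_sum => s _.
  rewrite /Phi; case: ifP => _; first by rewrite mulrC.
  by rewrite mulr_ge0 ?pw_ge0 // ltW // VV_gt0.
have := @sum_pw _ _ hf N; rewrite (bigID (bad kappa c)) /=.
set A := \sum_(s <- _ | bad _ _ _) _; set B := \sum_(s <- _ | ~~ bad _ _ _) _.
move=> e.
have : A <= c^-1 by rewrite -(ler_pM2l c0) mulfV ?gt_eqF.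
lra.
Qed.


Lemma hh_lb (R : realType) m : (1 <= m)%N -> 1 <= 4 * m%:R * hh m ^+ 2 :> R.
Proof.
elim: m => [//|m IH] _.
rewrite hh_S.
have H0 := @hh_gt0 R m.
case: m IH H0 => [|m] IH H0.
  rewrite /hh big_ord0.
  suff -> : 4 * 1%:R * (1 * (1 - (2 * 1%:R)^-1)) ^+ 2 = 1 :> R by [].
  by rewrite expr2; field.
have IH2 := IH isT; clear IH; rename IH2 into IH.
set H := hh m.+1 in IH H0 *.
have -> : 4 * m.+2%:R * (H * (1 - (2 * m.+2%:R)^-1)) ^+ 2
   = H ^+ 2 * (2 * m.+1%:R + 1) ^+ 2 / m.+2%:R :> R.
  rewrite -[m.+2]addn1 natrD; field.
  by rewrite gt_eqF //; have := ler0n R m; lra.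
have xp : 1 <= m.+1%:R :> R by rewrite ler1n.
rewrite ler_pdivlMr ?ltr0n // mul1r.
rewrite -[m.+2]addn1 natrD.
set x := m.+1%:R in IH xp *.
nra.
Qed.

Lemma aa_exp (R : realType) (kappa : R) n : 1 <= kappa ->
  aa kappa n <= expR (- \sum_(k < n) (2 * kappa * (2 * k + 1)%:R)^-1).
Proof.
move=> k1; rewrite -sumrN expR_sum; apply: ler_prod => k _.
rewrite ltW ?fac_a_gt0 //=.
have := expR_ge1Dx (- (2 * kappa * (2 * k + 1)%:R)^-1).
by rewrite addrC.
Qed.

Lemma harm_ln (R : realType) n :
  ln (2 * n + 1)%:R <= \sum_(k < n) 2 / (2 * k + 1)%:R :> R.
Proof.
elim: n => [|n IH]; first by rewrite muln0 add0n ln1 big_ord0.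
rewrite big_ord_recr /=.
have p1 : 0 < (2 * n + 1)%:R :> R by rewrite ltr0n addn1.
have -> : (2 * n.+1 + 1)%:R = (2 * n + 1)%:R * (1 + 2 / (2 * n + 1)%:R) :> R.
  rewrite mulrDr mulr1 mulrCA divff ?gt_eqF // mulr1 -natrD; congr (_%:R); lia.
have q0 : 0 < 2 / (2 * n + 1)%:R :> R by rewrite divr_gt0.
rewrite lnM ?posrE //.
apply: lerD => //; apply: le_ln1Dx; lra.
Qed.

Lemma aa_pow (R : realType) (kappa : R) n : 1 <= kappa -> (1 <= n)%N ->
  aa kappa n ^+ 2 <= n%:R `^ (- (2 * kappa)^-1).
Proof.
move=> k1 n1.
have kp : 0 < kappa by lra.
have np : 0 < n%:R :> R by rewrite ltr0n.
have a0 := @aa_gt0 R kappa n k1.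
set S := \sum_(k < n) (2 * kappa * (2 * k + 1)%:R)^-1.
have h1 : aa kappa n ^+ 2 <= expR (- S) ^+ 2.
  have h0 := @aa_exp R kappa n k1.
  by rewrite !expr2; apply: ler_pM => //; exact: ltW.
apply: le_trans h1 _.
rewrite -expRM_natl /powR gt_eqF // ler_expR.
have e : S = (4 * kappa)^-1 * \sum_(k < n) 2 / (2 * k + 1)%:R.
  rewrite /S mulr_sumr; apply: eq_bigr => k _.
  have hx : (2 * k + 1)%:R != 0 :> R by rewrite pnatr_eq0 addn1.
  have hk : kappa != 0 by rewrite gt_eqF.
  move: hx; set x := (2 * k + 1)%:R => hx.
  by field; rewrite hk andbT; move: hx; rewrite /x natrD natrM.
have h2 := harm_ln R n.
have h3 : ln n%:R <= ln (2 * n + 1)%:R :> R.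
  by rewrite ler_ln ?posrE ?ltr0n ?addn1 // ler_nat; lia.
have h4 : 0 < (4 * kappa)^-1 by rewrite invr_gt0; lra.
have h5 : (4 * kappa)^-1 * ln n%:R <= S.
  rewrite e; apply: ler_wpM2l; [exact: ltW | exact: le_trans h2].
have -> : - (2 * kappa)^-1 * ln n%:R = - 2 * ((4 * kappa)^-1 * ln n%:R).
  by field; lra.
lra.
Qed.


Lemma hist_S {T : Type} (J : nat -> T -> nat) n w :
  hist J n.+1 w = rcons (hist J n w) (J n w).
Proof. by rewrite /hist -addn1 iotaD map_cat /= cats1. Qed.

Lemma size_hist {T : Type} (J : nat -> T -> nat) n w : size (hist J n w) = n.
Proof. by rewrite /hist size_map size_iota. Qed.

Lemma take_hist {T : Type} (J : nat -> T -> nat) n N w : (n <= N)%N ->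
  take n (hist J N w) = hist J n w.
Proof. by move=> h; rewrite /hist -map_take take_iota (minn_idPl h). Qed.

Lemma maxdegE {T : Type} (J : nat -> T -> nat) n w : maxdeg J n w = Mx (hist J n w).
Proof. by rewrite /Mx size_hist. Qed.

Lemma hist_meas (d : measure_display) (T : measurableType d) (J : nat -> T -> nat)
  (hJ : forall k j, measurable [set w : T | J k w = j]) n :
  forall Q : seq nat -> Prop, measurable [set w : T | Q (hist J n w)].
Proof.
elim: n => [|n IH] Q.
  have [q|nq] := pselect (Q [::]).
    rewrite (_ : [set w | Q (hist J 0 w)] = setT) //.
    by apply/seteqP; split => w //= _.
  rewrite (_ : [set w | Q (hist J 0 w)] = set0) //.
  by apply/seteqP; split => w //=.
rewrite (_ : [set w | Q (hist J n.+1 w)] =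
  \bigcup_j ([set w | J n w = j] `&` [set w | Q (rcons (hist J n w) j)])).
  apply: bigcupT_measurable => j; apply: measurableI; first exact: hJ.
  exact: (IH (fun t => Q (rcons t j))).
apply/seteqP; split => w /=.
  by rewrite hist_S => q; exists (J n w) => //.
by move=> [j _ [<-]]; rewrite hist_S.
Qed.

Definition Ub {T : Type} (J : nat -> T -> nat) N (L : seq (seq nat)) : set T :=
  \big[setU/set0]_(s <- L) [set w | hist J N w = s].

Lemma Ub_meas (d : measure_display) (T : measurableType d) (J : nat -> T -> nat)
  (hJ : forall k j, measurable [set w : T | J k w = j]) N L :
  measurable (Ub J N L).
Proof.
rewrite /Ub; elim: L => [|s L IH]; first by rewrite big_nil.
rewrite big_cons; apply: measurableU => //.
exact: (@hist_meas _ _ J hJ N (fun t => t = s)).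
Qed.

Lemma Ub_in {T : Type} (J : nat -> T -> nat) N L w :
  Ub J N L w -> exists2 s, s \in L & hist J N w = s.
Proof.
rewrite /Ub; elim: L => [|s L IH]; first by rewrite big_nil.
rewrite big_cons => -[/= e|/IH [t tL e]].
  by exists s; rewrite ?inE ?eqxx.
by exists t; rewrite ?inE ?tL ?orbT.
Qed.

Lemma Ub_P (R : realType) (d : measure_display) (T : measurableType d)
  (P : probability T R) (f : nat -> R) (J : nat -> T -> nat)
  (hJ : is_GPA P f J) N L : uniq L -> {in L, forall s, size s = N} ->
  P (Ub J N L) = (\sum_(s <- L) path_weight f s)%:E.
Proof.
case: hJ => hJ1 hJ2.
elim: L => [|s L IH]; first by rewrite /Ub !big_nil measure0.
move=> /= /andP [sL uL] hs.
rewrite /Ub big_cons big_cons measureU.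
  rewrite EFinD; congr (_ + _); last first.
    by apply: IH => // t tL; apply: hs; rewrite inE tL orbT.
  have e : size s = N by apply: hs; rewrite inE eqxx.
  by rewrite -(hJ2 s) e.
- exact: (@hist_meas _ _ J hJ1 N (fun t => t = s)).
- exact: (@Ub_meas _ _ J hJ1 N L).
apply/seteqP; split => w // [/= e /(@Ub_in _ J N L w) [t tL e']].
by move: sL; rewrite -e e' tL.
Qed.


Theorem lemma3p12 (R : realType) (d : measure_display) (T : measurableType d)
  (P : probability T R) (f : nat -> R) (J : nat -> T -> nat)
  (hf : forall i, 0 < f i)
  (kappa : R) (hkappa : 0 < kappa)
  (hmax : forall n i : nat, (i <= n)%N ->
            f i / (i.+1)%:R <= kappa * (f n / (n.+1)%:R))
  (hJ : is_GPA P f J)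
  (eps : R) (heps : 0 < eps) :
  exists r : R, 0 < r /\
    ((1 - eps)%:E <=
      P [set w : T | forall n : nat, (1 <= n)%N ->
           (r <= (maxdeg J n w)%:R * (n%:R `^ (- (2 * kappa)^-1)))%R])%E.
Proof.
have k1 := @kappa_ge1 _ _ hf _ hmax.
have [hJ1 hJ2] := hJ.
set c := 1 + eps^-1.
have ei : 0 < eps^-1 by rewrite invr_gt0.
have c1 : 1 < c by rewrite /c; lra.
have c0 : 0 < c by lra.
have ce : c^-1 <= eps.
  rewrite -(ler_pM2r c0) mulVf ?gt_eqF // /c mulrDr mulr1 mulfV ?gt_eqF //; lra.
set r := (4 * c ^+ 2)^-1.
have r0 : 0 < r by rewrite invr_gt0 mulr_gt0 ?exprn_gt0.
exists r; split => //.
pose H N := [set w : T | forall n, (1 <= n <= N)%N ->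
   (r <= (maxdeg J n w)%:R * (n%:R `^ (- (2 * kappa)^-1)))%R].
have HE N : H N = [set w | (fun t => forall n, (1 <= n <= N)%N ->
    r <= (Mx (take n t))%:R * (n%:R `^ (- (2 * kappa)^-1))) (hist J N w)].
  apply/seteqP; split => w /= h n hn; move: (h n hn);
    by rewrite maxdegE take_hist //; case/andP: hn.
have Hm N : measurable (H N).
  rewrite HE; exact: (@hist_meas _ _ J hJ1 N (fun t => forall n, (1 <= n <= N)%N ->
    r <= (Mx (take n t))%:R * (n%:R `^ (- (2 * kappa)^-1)))).
have -> : [set w : T | forall n : nat, (1 <= n)%N ->
           (r <= (maxdeg J n w)%:R * (n%:R `^ (- (2 * kappa)^-1)))%R] = \bigcap_N H N.
  apply/seteqP; split => w /=.
    by move=> h N _ n /andP [hn _]; exact: h.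
  by move=> h n hn; apply: (h n I n); rewrite hn leqnn.
have Hbound N : ((1 - eps)%:E <= P (H N))%E.
  apply: (@le_trans _ _ (1 - c^-1)%:E); first by rewrite lee_fin; lra.
  pose L := [seq s <- vs N | ~~ bad kappa c s].
  have UL : Ub J N L `<=` H N.
    move=> w /(@Ub_in _ J N L w) [s]; rewrite mem_filter => /andP [nb sv] e n /andP [n1 nN].
    rewrite maxdegE -(@take_hist _ J n N w nN) e.
    have tv := vs_take n sv nN.
    have st := vs_size tv.
    have M1 := vs_Mx tv n1.
    have Vc : VV kappa (take n s) < c.
      have := hasPn nb n; rewrite mem_iota add0n (vs_size sv) ltnS nN => /(_ isT).
      by rewrite -ltNge.
    move: Vc; rewrite /VV st ltr_pdivrMr ?aa_gt0 // => Vc.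
    have HA := @aa_pow R kappa n k1 n1.
    have HL := @hh_lb R _ M1.
    have h0 := @hh_gt0 R (Mx (take n s)).
    have a0 := @aa_gt0 R kappa n k1.
    set p := n%:R `^ _ in HA *; set Hh := hh _ in Vc HL h0 *.
    set A := aa kappa n in Vc HA a0 *; set m := (Mx (take n s))%:R in HL *.
    have m0 : 0 <= m by rewrite /m ler0n.
    have q1 : Hh ^+ 2 <= c ^+ 2 * A ^+ 2.
      rewrite -exprMn !expr2; apply: ler_pM; rewrite ?ltW //; lra.
    have s1 := ler_wpM2l m0 q1.
    have s2 : m * (c ^+ 2 * A ^+ 2) <= m * (c ^+ 2 * p).
      by apply: ler_wpM2l => //; apply: ler_wpM2l; rewrite ?sqr_ge0.
    have c2 : 0 < 4 * c ^+ 2 by rewrite mulr_gt0 ?exprn_gt0.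
    rewrite /r -(ler_pM2r c2) mulVf ?gt_eqF //.
    lra.
  have PU := @Ub_P R d T P f J hJ N L (filter_uniq _ (vs_uniq N))
     (fun s hs => vs_size (mem_subseq (filter_subseq _ _) hs)).
  rewrite big_filter in PU.
  apply: (@le_trans _ _ (P (Ub J N L))).
    by rewrite PU lee_fin; exact: (@good_sum R f hf kappa hmax c N c1).
  apply: le_measure UL; rewrite inE //.
  exact: (@Ub_meas _ _ J hJ1 N L).
have Hfin : (P (H 0%N) < +oo)%E.
  by apply: le_lt_trans (probability_le1 P (Hm 0%N)) (ltry 1).
have Hni : {homo H : n m / (n <= m)%N >-> (n >= m)%O}.
  move=> n m nm; apply/subsetPset => w hw k /andP [k1' km]; apply: hw.
  by rewrite k1' (leq_trans km nm).
have Hcvg := nonincreasing_cvg_mu Hfin Hm (bigcapT_measurable Hm) Hni.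
apply: (lee_cvg_to (cvg_cst _) Hcvg); apply: nearW => N; exact: Hbound.
Qed.
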